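(* For $i\in\mathbb{Z}_{>0}$ and $\epsilon>0$, the inclusion $\mathbb{CP}^n\times\mathbb{CP}^n\times\{i\pi+\epsilon\}\to Z_i$ is a homotopy equivalence.
   Context: $\mathbb{CP}^n$ has the Fubini–Study metric (Kähler form $\sum2\sqrt{-1}h_{ij}dz_i\wedge d\bar z_j$, $h_{ij}=\frac{(1+\sum_k|z_k|^2)\delta_{ij}-\bar z_iz_j}{(1+\sum_k|z_k|^2)^2}$), geodesic distance $\mathrm{dist}$, diameter $\pi$. For $x\in\mathbb{CP}^n$, $D_x=\{y\mid\mathrm{dist}(x,y)=\pi\}$. For $i>0$, $Z_i\subset\mathbb{CP}^n\times\mathbb{CP}^n\times\mathbb{R}$ is $\{(x,y,t)\mid\mathrm{dist}(x,y)<t-(i-1)\pi\}$ if $i$ is odd and $\{(x,y,t)\mid\mathrm{dist}(x,D_y)<t-(i-1)\pi\}$ if $i$ is even. *)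

(* Defs.v *)
From HB Require Import structures.
From mathcomp Require Import all_boot all_order all_algebra.
From mathcomp Require Import all_classical all_reals all_analysis.
Set Implicit Arguments.
Unset Strict Implicit.
Unset Printing Implicit Defensive.
Import Order.TTheory GRing.Theory Num.Theory.
Import numFieldNormedType.Exports.
Local Open Scope classical_set_scope.
Local Open Scope ring_scope.

Definition continuous_on {X Y : topologicalType} (A : set X) (f : X -> Y) :=
  continuous (fun a : set_type A => f (set_val a)).

Definition unit_interval (R : realType) : set R := [set t | 0 <= t <= 1].

Definition homotopic_on {R : realType} {X Y : topologicalType}
    (A : set X) (B : set Y) (f g : X -> Y) :=
  exists H : X -> R -> Y,
    continuous (fun p : set_type A * set_type (@unit_interval R) =>
                  H (set_val p.1) (set_val p.2)) /\
    (forall (x : X) (t : R), A x -> @unit_interval R t -> B (H x t)) /\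
    (forall x, A x -> H x (0 : R) = f x /\ H x (1 : R) = g x).

Definition homotopy_equivalence_on (R : realType) {X Y : topologicalType}
    (A : set X) (B : set Y) (f : X -> Y) :=
  (forall x, A x -> B (f x)) /\ continuous_on A f /\
  exists g : Y -> X,
    (forall y, B y -> A (g y)) /\ continuous_on B g /\
    @homotopic_on R X X A A (g \o f) id /\
    @homotopic_on R Y Y B B (f \o g) id.

(* A point of CP^n (n = dimension) is represented by the Hermitian rank-one
   projector v v^* (v unit vector in C^(n+1)), written as the pair (A, B)
   of real (n+1)x(n+1) matrices with v v^* = A + sqrt(-1) B.
   For v = x + sqrt(-1) y  (x, y real row vectors):
     A = x^T x + y^T y,  B = y^T x - x^T y.
   CP^n carries the subspace topology of 'M_(n+1) * 'M_(n+1); this embedding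
   is a homeomorphism onto its image from the usual quotient topology. *)

Definition cpt (R : realType) (n : nat) : Type :=
  ('M[R]_(n.+1) * 'M[R]_(n.+1))%type.

Definition CP (R : realType) (n : nat) : set (cpt R n) :=
  [set P | exists x y : 'rV[R]_(n.+1),
      \sum_(k < n.+1) (x 0 k ^+ 2 + y 0 k ^+ 2) = 1 /\
      P = (x^T *m x + y^T *m y, y^T *m x - x^T *m y)].
Arguments CP : clear implicits.

(* Fubini–Study geodesic distance (normalization with diameter pi):
   dist([u],[v]) = 2 arccos |<u,v>|  for unit u, v, and
   |<u,v>|^2 = Re tr((A+iB)(C+iD)) = tr(AC) - tr(BD). *)
Definition fs_dist (R : realType) (n : nat) (P Q : cpt R n) : R :=
  2 * acos (Num.sqrt (\tr (P.1 *m Q.1 - P.2 *m Q.2))).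

Definition Dset (R : realType) (n : nat) (y : cpt R n) : set (cpt R n) :=
  [set z | CP R n z /\ fs_dist y z = pi].

Definition dist_D (R : realType) (n : nat) (x y : cpt R n) : R :=
  inf [set fs_dist x z | z in Dset y].

Definition Zset (R : realType) (n i : nat) : set (cpt R n * cpt R n * R) :=
  [set p | CP R n p.1.1 /\ CP R n p.1.2 /\
     (if odd i then fs_dist p.1.1 p.1.2 < p.2 - (i%:R - 1) * pi
      else dist_D p.1.1 p.1.2 < p.2 - (i%:R - 1) * pi)].
Arguments Zset : clear implicits.

Definition slice (R : realType) (n : nat) (c : R) : set (cpt R n * cpt R n * R) :=
  [set p | CP R n p.1.1 /\ CP R n p.1.2 /\ p.2 = c].
Arguments slice : clear implicits.

(* Main.v *)
Require Import Defs.
From HB Require Import structures.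
From mathcomp Require Import all_boot all_order all_algebra.
From mathcomp Require Import all_classical all_reals all_analysis.
From mathcomp Require Import ring lra.
Import Order.TTheory GRing.Theory Num.Theory.
Import numFieldNormedType.Exports.
Local Open Scope classical_set_scope.
Local Open Scope ring_scope.

Lemma acos_bnd (R : realType) (x : R) : 0 <= x -> 0 <= acos x <= pi / 2.
Proof.
move=> x0.
have [x1|x1] := leP x 1.
  have [/andP[h0 hpi] hc] : 0 <= acos x <= pi /\ cos (acos x) = x.
    by apply: acos_def; rewrite x1 andbT (le_trans _ x0).
  rewrite h0 /=; rewrite leNgt; apply/negP => hlt.
  have : 0 < cos (acos x - pi).
    apply: cos_gt0_pihalf.
    have hp : 0 < pi :> R := pi_gt0 R.
    apply/andP; split; lra.
  have -> : cos (acos x - pi) = - cos (acos x).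
    by rewrite -[in RHS](subrK pi (acos x)) cosDpi opprK.
  by rewrite hc oppr_gt0 ltNge x0.
rewrite unlock /acos; case: xgetP => [y _ [_ hy]|_].
  by move: (cos_le1 y); rewrite hy leNgt x1.
have hp : 0 < pi :> R := pi_gt0 R.
rewrite /point /=. apply/andP; split; lra.
Qed.

Lemma sv_cont {X : topologicalType} {A : set X} : continuous (@set_val X A).
Proof. exact: initial_continuous. Qed.
Lemma fst_cont {X Y : topologicalType} : continuous (@fst X Y).
Proof. move=> p; exact: cvg_fst. Qed.
Lemma snd_cont {X Y : topologicalType} : continuous (@snd X Y).
Proof. move=> p; exact: cvg_snd. Qed.
Lemma pair_cont {T X Y : topologicalType} {f : T -> X} {g : T -> Y} :
  continuous f -> continuous g -> continuous (fun t => (f t, g t)).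
Proof. move=> hf hg t; exact: cvg_pair (hf t) (hg t). Qed.
Lemma comp_cont {T X Y : topologicalType} {f : T -> X} {g : X -> Y} :
  continuous f -> continuous g -> continuous (g \o f).
Proof. move=> hf hg t; exact: continuous_comp (hf t) (hg (f t)). Qed.
Lemma add_cont {R : realType} {T : topologicalType} {f g : T -> R} :
  continuous f -> continuous g -> continuous (fun t => f t + g t).
Proof. move=> hf hg t; exact: continuousD (hf t) (hg t). Qed.
Lemma mul_cont {R : realType} {T : topologicalType} {f g : T -> R} :
  continuous f -> continuous g -> continuous (fun t => f t * g t).
Proof. move=> hf hg t; exact: continuousM (hf t) (hg t). Qed.

Lemma fs_dist_bnd (R : realType) (n : nat) (P Q : cpt R n) :
  0 <= fs_dist P Q <= pi.
Proof.
rewrite /fs_dist.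
have /andP[h1 h2] := @acos_bnd R _ (sqrtr_ge0 (\tr (P.1 *m Q.1 - P.2 *m Q.2))).
apply/andP; split; lra.
Qed.

Lemma dist_D_bnd (R : realType) (n : nat) (x y : cpt R n) : dist_D x y <= pi.
Proof.
rewrite /dist_D.
have hp : 0 < pi :> R := pi_gt0 R.
have [[z hz]|hne] := pselect (exists z, Dset y z).
  have lb : has_lbound [set fs_dist x z | z in Dset y].
    exists 0 => _ [w _ <-]; by have /andP[] := @fs_dist_bnd R n x w.
  have := ge_inf lb (ex_intro2 _ _ z hz erefl).
  have /andP[_ h] := @fs_dist_bnd R n x z.
  move=> h2; exact: le_trans h2 h.
have -> : [set fs_dist x z | z in Dset y] = set0.
  apply/seteqP; split=> // r [z hz _]; exfalso; apply: hne; by exists z.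
rewrite inf0; lra.
Qed.

Lemma conv_lt {R : realType} (P q c T t s : R) :
  P < T - c -> 0 < P -> 0 <= s -> s <= 1 -> q < t - c -> q <= P ->
  q < (1 - s) * T + s * t - c.
Proof.
move=> h1 hp h2 h3 h4 h5.
have -> : (1 - s) * T + s * t - c = (1 - s) * (T - c) + s * (t - c) by ring.
have e1 : (1 - s) * q <= (1 - s) * (T - c) by apply: ler_wpM2l; lra.
have [s0|s0] := eqVneq s 0.
  rewrite s0; lra.
have e2 : s * q < s * (t - c).
  by rewrite ltr_pM2l // lt_neqAle eq_sym s0 h2.
lra.
Qed.

Theorem lemma4p2 (R : realType) (n : nat) (hn : (0 < n)%N)
    (i : nat) (hi : (0 < i)%N) (eps : R) (heps : 0 < eps) :
  homotopy_equivalence_on R (slice R n (i%:R * pi + eps)) (Zset R n i) id.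
Proof.
set T := i%:R * pi + eps.
have hp : 0 < pi :> R := pi_gt0 R.
have key : forall a b : cpt R n,
    (if odd i then fs_dist a b else dist_D a b) <= pi.
  move=> a b; case: ifP => _; last exact: (@dist_D_bnd R n).
  by have /andP[] := @fs_dist_bnd R n a b.
split.
  move=> p [h1 [h2 h3]]; split=> //; split=> //.
  move: (key p.1.1 p.1.2); rewrite h3 /T; case: ifP => _ hk; lra.
split.
  exact: sv_cont.
exists (fun p => (p.1, T)).
split.
  by move=> p [h1 [h2 h3]].
split.
  rewrite /continuous_on.
  apply: pair_cont.
    exact: comp_cont sv_cont fst_cont.
  exact: cst_continuous.
split.
  exists (fun x _ => x); split.
    exact: comp_cont fst_cont sv_cont.
  split; first by [].
  move=> [[a b] t] [h1 [h2 h3]]; rewrite /= in h3; by rewrite /= h3.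
exists (fun x s => (x.1, (1 - s) * T + s * x.2)); split.
  apply: pair_cont.
    exact: comp_cont (comp_cont fst_cont sv_cont) fst_cont.
  apply: add_cont.
    apply: mul_cont; last exact: cst_continuous.
    apply: add_cont; first exact: cst_continuous.
    move=> t; apply: (@continuousN _ _ _ (fun p => set_val p.2)).
    exact: (comp_cont snd_cont sv_cont) t.
  apply: mul_cont.
    exact: comp_cont snd_cont sv_cont.
  exact: comp_cont (comp_cont fst_cont sv_cont) snd_cont.
split.
  move=> [[a b] t] s [h1 [h2 h3]] /andP[s0 s1]; split=> //; split=> //=.
  move: h3 (key a b) => /=; rewrite /T; case: ifP => _ h3 hq; apply: (conv_lt pi) => //; lra.
move=> [[a b] t] _; split; rewrite /=.
  by rewrite subr0 mul1r mul0r addr0.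
by rewrite subrr mul0r add0r mul1r.
Qed.
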